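(* Let $n_1,n_2\ge3$. The graphs $\overline{L(K_{2,n_1})}$ and $\overline{L(K_{2,n_2})}$ are $\mathcal{C}$-$\mathrm{HH}$-symmetric if and only if they are isomorphic (i.e. $n_1=n_2$).
   Context: $\overline{L(K_{2,n})}$ (bipartite complement of a perfect matching) is the bipartite graph with parts $\{x_1,\dots,x_n\}$, $\{y_1,\dots,y_n\}$ and $x_i\sim y_j$ iff $i\ne j$. Subgraphs are induced; a homomorphism maps edges to edges. $G_1$ is $\mathcal{C}$-$\mathrm{HH}$-morphic to $G_2$ if every homomorphism from a finite connected induced subgraph $A$ of $G_1$ onto an induced subgraph $B$ of $G_2$ extends to a homomorphism $G_1\to G_2$; $G_1,G_2$ are $\mathcal{C}$-$\mathrm{HH}$-symmetric if each is $\mathcal{C}$-$\mathrm{HH}$-morphic to the other. *)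

(* Defs.v *)
From mathcomp Require Import all_boot.
Set Implicit Arguments. Unset Strict Implicit. Unset Printing Implicit Defensive.

(* Bipartite complement of a perfect matching on n+n vertices:
   x_i = (false, i), y_j = (true, j); x_i ~ y_j iff i <> j. *)
Definition BCPM_V (n : nat) : finType := (bool * 'I_n)%type.
Definition BCPM_adj (n : nat) : rel (BCPM_V n) :=
  fun u v => (u.1 != v.1) && (u.2 != v.2).

Definition induced_connected (T : finType) (e : rel T) (A : {set T}) : Prop :=
  A != set0 /\
  forall x y, x \in A -> y \in A ->
    connect [rel u v | [&& u \in A, v \in A & e u v]] x y.

Definition hom_on (T1 T2 : finType) (e1 : rel T1) (e2 : rel T2)
  (A : {set T1}) (f : T1 -> T2) : Prop :=
  forall x y, x \in A -> y \in A -> e1 x y -> e2 (f x) (f y).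

Definition graph_hom (T1 T2 : finType) (e1 : rel T1) (e2 : rel T2)
  (g : T1 -> T2) : Prop :=
  forall x y, e1 x y -> e2 (g x) (g y).

Definition CHH_morphic (T1 T2 : finType) (e1 : rel T1) (e2 : rel T2) : Prop :=
  forall (A : {set T1}) (B : {set T2}) (f : T1 -> T2),
    induced_connected e1 A ->
    hom_on e1 e2 A f ->
    f @: A = B ->
    exists g : T1 -> T2, graph_hom e1 e2 g /\ (forall x, x \in A -> g x = f x).

Definition CHH_symmetric (T1 T2 : finType) (e1 : rel T1) (e2 : rel T2) : Prop :=
  CHH_morphic e1 e2 /\ CHH_morphic e2 e1.

Definition graph_iso (T1 T2 : finType) (e1 : rel T1) (e2 : rel T2) : Prop :=
  exists g : T1 -> T2, bijective g /\ forall x y, e2 (g x) (g y) = e1 x y.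

(* Main.v *)
Require Import Defs.
From mathcomp Require Import all_boot zify.

Lemma ext_lem n s : forall k (A : {set BCPM_V n}) (f : BCPM_V n -> BCPM_V n),
  #|~: A| = k -> hom_on (@BCPM_adj n) (@BCPM_adj n) A f ->
  (forall a, a \in A -> (f a).1 = addb a.1 s) ->
  exists g, graph_hom (@BCPM_adj n) (@BCPM_adj n) g /\ forall x, x \in A -> g x = f x.
Proof.
elim=> [|k IH] A f hk hf hs.
  have AT : A = setT.
    by apply/setP=> x; rewrite inE; apply/negbNE; rewrite -in_setC; move/eqP: hk; rewrite cards_eq0 => /eqP ->; rewrite inE.
  exists f; split=> // x y; apply: hf; by rewrite AT inE.
have : ~: A != set0 by rewrite -card_gt0 hk.
case/set0Pn=> x; rewrite inE => xA.
case: x xA => b i xA.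
set S := [set (f (~~ b, j)).2 | j in [set~ i]].
have : ~: S != set0.
  rewrite -card_gt0.
  have h1 := leq_imset_card (fun j => (f (~~ b, j)).2) [set~ i].
  have h2 := cardsC S. rewrite cardsC1 card_ord in h1. rewrite card_ord in h2.
  rewrite -/S in h1. have := ltn_ord i. lia.
case/set0Pn=> m; rewrite inE => mS.
pose w : BCPM_V n := (addb b s, m).
pose f' := fun y => if y == (b, i) then w else f y.
have H1 : #|~: ((b, i) |: A)| = k.
  move: hk; rewrite setCU (cardsD1 (b, i) (~: A)) inE xA /= => -[<-].
  congr #|_|; by rewrite setDE setIC.
have H2 : hom_on (@BCPM_adj n) (@BCPM_adj n) ((b, i) |: A) f'.
  move=> y z; rewrite !inE /f'.
  have key : forall z, z \in A -> BCPM_adj (b, i) z -> BCPM_adj w (f z).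
    move=> [zb zj] zA; rewrite /BCPM_adj /= => /andP [hb hj].
    have fz := hs _ zA. rewrite /= in fz.
    have zbE : zb = ~~ b by move: hb; move: (b) (zb) => b0 zb0; case: b0; case: zb0.
    rewrite {}zbE in fz hb zA *.
    apply/andP; split.
      by rewrite fz; move: (b) (s) => b0 s0; case: b0; case: s0.
    apply/negP => /eqP me.
    move/negP: mS; apply; apply/imsetP; exists zj; first by rewrite !inE eq_sym.
    by [].
  case: (eqVneq y (b, i)) => [-> | yx] /=; case: (eqVneq z (b, i)) => [-> | zx] //=.
  - by rewrite /BCPM_adj eqxx.
  - move=> _ zA; exact: key.
  - move=> yA _ hyz; rewrite /BCPM_adj eq_sym andbC eq_sym andbC.
    apply: key => //; by rewrite /BCPM_adj eq_sym andbC eq_sym andbC.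
  - by move=> yA zA; apply: hf.
have H3 : forall a, a \in (b, i) |: A -> (f' a).1 = addb a.1 s.
  move=> y; rewrite !inE /f'; case: (eqVneq y (b, i)) => [-> | yx] //= yA.
  exact: hs.
have [g [hg hgA]] := IH ((b, i) |: A) f' H1 H2 H3.
exists g; split=> // y yA; rewrite hgA ?inE ?yA ?orbT // /f'.
case: (eqVneq y (b, i)) => // e; move: xA; by rewrite -e yA.
Qed.

Lemma adj_sym n : symmetric (@BCPM_adj n).
Proof. by move=> u v; rewrite /BCPM_adj eq_sym (eq_sym u.2). Qed.

Lemma self_morphic n : CHH_morphic (@BCPM_adj n) (@BCPM_adj n).
Proof.
move=> A B f [A0 hc] hf _.
case/set0Pn: A0 => a0 a0A.
pose s := addb a0.1 (f a0).1.
apply: (@ext_lem n s _ A f erefl hf).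
move=> a aA.
pose Q := [pred a | (f a).1 == addb a.1 s].
have cl : closed [rel u v | [&& u \in A, v \in A & BCPM_adj u v]] Q.
  move=> u v /= /and3P [uA vA huv].
  have hfuv := hf u v uA vA huv.
  move: huv hfuv; rewrite /BCPM_adj /= => /andP [h1 _] /andP [h2 _].
  rewrite !inE /=; move: h1 h2; move: (u.1) (v.1) ((f u).1) ((f v).1) (s) => p q r t z.
  by case: p; case: q; case: r; case: t; case: z.
have := closed_connect cl (hc a0 a a0A aA).
rewrite !inE /= /s => e.
apply/eqP; rewrite -e.
by move: (a0.1) ((f a0).1) => p q; case: p; case: q.
Qed.

Lemma ord_neqE n (a b : 'I_n) : (a != b) = (nat_of_ord a != nat_of_ord b).
Proof. by []. Qed.

Lemma not_morphic n1 n2 : 3 <= n1 -> n1 < n2 ->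
  ~ CHH_morphic (@BCPM_adj n2) (@BCPM_adj n1).
Proof.
case: n1 => [//|m] h3 hlt hm.
pose f (v : BCPM_V n2) : BCPM_V m.+1 := (v.1, inord v.2).
pose A := [set v : BCPM_V n2 | (v.2 < m.+1) && (v.1 || (v.2 < 2))].
pose R := [rel u v | [&& u \in A, v \in A & BCPM_adj u v]].
have R_sym : symmetric R.
  move=> u v /=; rewrite adj_sym; by case: (u \in A); case: (v \in A).
have l0 : 0 < n2 by lia.
have l1 : 1 < n2 by lia.
have l2 : 2 < n2 by lia.
pose h : BCPM_V n2 := (true, Ordinal l2).
pose x0 : BCPM_V n2 := (false, Ordinal l0).
pose x1 : BCPM_V n2 := (false, Ordinal l1).
have toh : forall v, v \in A -> connect R v h.
  move=> [vb vi]; rewrite inE /= => /andP [vm hv].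
  case: vb hv => /= hv.
    case: (eqVneq (nat_of_ord vi) 0) => e.
      apply: (@connect_trans _ _ x1); apply: connect1;
      rewrite /= !inE /BCPM_adj /= ?ord_neqE /=; lia.
    apply: (@connect_trans _ _ x0); apply: connect1;
    rewrite /= !inE /BCPM_adj /= ?ord_neqE /=; lia.
  apply: connect1; rewrite /= !inE /BCPM_adj /= ?ord_neqE /=; lia.
have conA : induced_connected (@BCPM_adj n2) A.
  split.
    apply/set0Pn; exists h; rewrite inE /=; lia.
  move=> u v uA vA; apply: (@connect_trans _ _ h); first exact: toh.
  rewrite (sym_connect_sym R_sym); exact: toh.
have homf : hom_on (@BCPM_adj n2) (@BCPM_adj m.+1) A f.
  move=> u v; rewrite !inE => /andP [um _] /andP [vm _].
  rewrite /BCPM_adj /= => /andP [-> hi] /=.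
  by rewrite ?ord_neqE /= !inordK.
have [g [hg hgA]] := hm A (f @: A) f conA homf erefl.
pose z : BCPM_V n2 := (false, Ordinal hlt).
case gz : (g z) => [b k].
have kn2 : k < n2 by have := ltn_ord k; lia.
pose y : BCPM_V n2 := (true, Ordinal kn2).
have yA : y \in A by rewrite inE /= ltn_ord.
have zy : BCPM_adj z y.
  rewrite /BCPM_adj /= ?ord_neqE /=; have := ltn_ord k; lia.
have := hg z y zy; rewrite (hgA y yA) gz /f /BCPM_adj /=.
have -> : (inord k : 'I_m.+1) = k by apply: val_inj; rewrite /= inordK.
by rewrite eqxx andbF.
Qed.

Lemma card_V n : #|BCPM_V n| = (2 * n)%N.
Proof. by rewrite /BCPM_V card_prod card_bool card_ord. Qed.

Theorem lemma6p4 (n1 n2 : nat) (h1 : 3 <= n1) (h2 : 3 <= n2) :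
  CHH_symmetric (@BCPM_adj n1) (@BCPM_adj n2) <->
  graph_iso (@BCPM_adj n1) (@BCPM_adj n2).
Proof.
split.
  move=> [m12 m21].
  have e : n1 = n2.
    case: (ltngtP n1 n2) => // hlt.
      exfalso; exact: (@not_morphic n1 n2 h1 hlt m21).
    exfalso; exact: (@not_morphic n2 n1 h2 hlt m12).
  subst n2; exists id; split => //; exists id => //.
move=> [g [bg _]].
have e : n1 = n2.
  have := bij_eq_card bg; rewrite !card_V; lia.
subst n2; split; exact: self_morphic.
Qed.
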